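(* Under the setting below (in which $\mathbb{P}(X_{0:t}(a_{1:t})\in B_{0:t})>0$ and $\mathbb{P}(\underline y\le Y(a_{1:t})\le\overline y\mid X_{0:t}(a_{1:t})\in B_{0:t})=1$), there exist potential outcomes $(\tilde X_{0:T}(a'_{1:T}),\tilde Y(a'_{1:t}):a'_{1:T}\in\mathcal{A}_{1:T})$, also satisfying $\mathbb{P}(\underline y\le\tilde Y(a_{1:t})\le\overline y\mid\tilde X_{0:t}(a_{1:t})\in B_{0:t})=1$, with $$(\tilde X_{0:T}(A_{1:T}),\tilde Y(A_{1:t}),A_{1:T})=(X_{0:T}(A_{1:T}),Y(A_{1:t}),A_{1:T})\quad\text{almost surely},$$ but for which $\mathbb{E}[\tilde Y(a_{1:t})\mid\tilde X_{0:t}(a_{1:t})\in B_{0:t}]=\mathbb{E}[\underline Y\mid X_{0:N}(A_{1:N})\in B_{0:N}]$. The corresponding statement with $\overline Y$ in place of $\underline Y$ also holds.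
   Context: Horizon $T\ge1$, $\mathcal{X}_t=\mathbb{R}^{d_t}$, finite action spaces $\mathcal{A}_t$; potential outcomes $X_0$, $X_t(a_{1:t})\in\mathcal{X}_t$, random actions $A_{1:T}$, real-valued potential outcomes $Y(a_{1:t})$ defined jointly; $X_{0:t}(a_{1:t})=(X_0,X_1(a_1),\dots,X_t(a_{1:t}))$. Fixed $t\in\{1,\dots,T\}$, $a_{1:t}\in\mathcal{A}_{1:t}$, measurable $B_{0:t}=B_0\times\cdots\times B_t$, $\underline y,\overline y\in\mathbb{R}$. $N=\max\{0\le s\le t:A_{1:s}=a_{1:s}\}$; $\underline Y=\mathbb{1}(A_{1:t}=a_{1:t})Y(A_{1:t})+\mathbb{1}(A_{1:t}\ne a_{1:t})\underline y$, $\overline Y$ likewise with $\overline y$. Quantities evaluated at random actions denote the potential outcome indexed by the realized actions. *)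

(* Defs.v *)
From mathcomp Require Import all_boot all_order all_algebra.
From mathcomp Require Import all_classical all_reals all_analysis.
Import Order.TTheory GRing.Theory Num.Theory.
Import numFieldNormedType.Exports.
Set Implicit Arguments. Unset Strict Implicit. Unset Printing Implicit Defensive.
Local Open Scope classical_set_scope.
Local Open Scope ring_scope.

Section Defs.
Context {R : realType} {dΩ : measure_display} {Ω : measurableType dΩ}.

Definition borelRn (n : nat) (B : set 'rV[R]_n) : Prop :=
  <<s [set U : set 'rV[R]_n | open U] >> B.

Definition rvec (n : nat) (f : Ω -> 'rV[R]_n) : Prop :=
  forall B, borelRn B -> measurable (f @^-1` B).

(** Action sequences: (a_s)_s with a_s in Act s; only a_1,...,a_T matter. *)
Definition hist (Act : nat -> finType) := forall s : nat, Act s.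

Definition agree (Act : nat -> finType) (s : nat) (a a' : hist Act) : bool :=
  [forall i : 'I_s, a i.+1 == a' i.+1].

Definition real_hist (Act : nat -> finType) (A : forall s, Ω -> Act s) (w : Ω)
  : hist Act := fun s => A s w.

Definition condprob (P : probability Ω R) (F E : set Ω) : R :=
  fine (P (F `&` E)) / fine (P E).

Definition condexp (P : probability Ω R) (f : Ω -> R) (E : set Ω) : \bar R :=
  ((\int[P]_(w in E) (f w)%:E) * ((fine (P E))^-1)%:E)%E.

Definition Xin (Act : nat -> finType) (dim : nat -> nat)
  (X : forall s : nat, hist Act -> Ω -> 'rV[R]_(dim s))
  (B : forall s : nat, set 'rV[R]_(dim s)) (s : nat) (a : hist Act) : set Ω :=
  [set w | forall i, (i <= s)%N -> B i (X i a w)].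

Definition Nidx (Act : nat -> finType) (A : forall s, Ω -> Act s) (t : nat)
  (a : hist Act) (w : Ω) : nat :=
  \max_(s < t.+1 | agree s (real_hist A w) a) (s : nat).

Definition XNin (Act : nat -> finType) (dim : nat -> nat)
  (X : forall s : nat, hist Act -> Ω -> 'rV[R]_(dim s))
  (B : forall s : nat, set 'rV[R]_(dim s)) (A : forall s, Ω -> Act s)
  (t : nat) (a : hist Act) : set Ω :=
  [set w | forall i, (i <= Nidx A t a w)%N -> B i (X i (real_hist A w) w)].

Definition Ybound (Act : nat -> finType) (Y : hist Act -> Ω -> R)
  (A : forall s, Ω -> Act s) (t : nat) (a : hist Act) (c : R) (w : Ω) : R :=
  if agree t (real_hist A w) a then Y (real_hist A w) w else c.

Definition potential_outcomes (Act : nat -> finType) (dim : nat -> nat) (T t : nat)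
  (X : forall s : nat, hist Act -> Ω -> 'rV[R]_(dim s))
  (Y : hist Act -> Ω -> R) : Prop :=
  (forall s a a', (s <= T)%N -> agree s a a' -> X s a = X s a') /\
  (forall a a', agree t a a' -> Y a = Y a') /\
  (forall s a, (s <= T)%N -> rvec (X s a)) /\
  (forall a, measurable_fun setT (Y a)).

Definition sharp_witness (P : probability Ω R) (Act : nat -> finType)
  (dim : nat -> nat) (T t : nat)
  (X : forall s : nat, hist Act -> Ω -> 'rV[R]_(dim s)) (Y : hist Act -> Ω -> R)
  (A : forall s, Ω -> Act s) (a : hist Act)
  (B : forall s : nat, set 'rV[R]_(dim s)) (ylo yhi c : R) : Prop :=
  exists (Xt : forall s : nat, hist Act -> Ω -> 'rV[R]_(dim s))
         (Yt : hist Act -> Ω -> R),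
    potential_outcomes T t Xt Yt /\
    condprob P [set w | ylo <= Yt a w <= yhi] (Xin Xt B t a) = 1 /\
    {ae P, forall w,
       (forall s, (s <= T)%N ->
          Xt s (real_hist A w) w = X s (real_hist A w) w) /\
       Yt (real_hist A w) w = Y (real_hist A w) w} /\
    condexp P (Yt a) (Xin Xt B t a)
      = condexp P (Ybound Y A t a c) (XNin X B A t a).

End Defs.

(* Main.v *)
Require Import Defs.
From mathcomp Require Import all_boot all_order all_algebra.
From mathcomp Require Import all_classical all_reals all_analysis.
From mathcomp Require Import lra.
Import Order.TTheory GRing.Theory Num.Theory.
Local Open Scope classical_set_scope.
Local Open Scope ring_scope.

Section H.
Context (Act : nat -> finType).

Lemma agreeP s (a b : hist Act) :
  agree s a b <-> (forall i, (i < s)%N -> a i.+1 = b i.+1).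
Proof.
split.
- by move=> /forallP h i lis; exact/eqP/(h (Ordinal lis)).
- by move=> h; apply/forallP => i; apply/eqP/h.
Qed.

Lemma agree_refl s (a : hist Act) : agree s a a.
Proof. by apply/agreeP. Qed.

Lemma agree_sym s (a b : hist Act) : agree s a b -> agree s b a.
Proof. by move/agreeP=> h; apply/agreeP=> i /h ->. Qed.

Lemma agree_trans s (a b c : hist Act) : agree s a b -> agree s b c -> agree s a c.
Proof. by move/agreeP=> h1 /agreeP h2; apply/agreeP=> i li; rewrite h1 ?h2. Qed.

Lemma agree_le i s (a b : hist Act) : (i <= s)%N -> agree s a b -> agree i a b.
Proof.
move=> lis /agreeP h; apply/agreeP=> j lj; apply: h.
exact: leq_trans lj lis.
Qed.

Lemma agreeS s (a b : hist Act) :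
  agree s.+1 a b = agree s a b && (a s.+1 == b s.+1).
Proof.
apply/idP/idP.
- move=> /agreeP h; apply/andP; split; last by apply/eqP/h.
  by apply/agreeP=> i li; apply: h; exact: ltnW.
- move=> /andP[/agreeP h /eqP e]; apply/agreeP=> i; rewrite ltnS leq_eqVlt.
  by case/orP=> [/eqP -> //|]; exact: h.
Qed.

Context {R : realType} {dΩ : measure_display} {Ω : measurableType dΩ}.

Lemma Nidx_agree (A : forall s, Ω -> Act s) t (a : hist Act) w :
  agree (Nidx A t a w) (real_hist A w) a.
Proof.
rewrite /Nidx; apply: (big_ind (fun n => agree n (real_hist A w) a)).
- exact/agreeP.
- by move=> x y hx hy; rewrite /maxn; case: ltnP.
- by [].
Qed.

Lemma Nidx_max (A : forall s, Ω -> Act s) t (a : hist Act) w i :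
  (i <= t)%N -> agree i (real_hist A w) a -> (i <= Nidx A t a w)%N.
Proof.
move=> it ag; rewrite /Nidx.
have := @leq_bigmax_cond _ (fun s : 'I_t.+1 => agree s (real_hist A w) a)
   (fun s : 'I_t.+1 => (s : nat)) (Ordinal (it : (i < t.+1)%N)).
by apply.
Qed.

Lemma meas_agree (A : forall s, Ω -> Act s) (T : nat) (a : hist Act) s :
  (forall s (v : Act s), (1 <= s <= T)%N -> measurable (A s @^-1` [set v])) ->
  (s <= T)%N -> measurable [set w | agree s a (real_hist A w)].
Proof.
move=> hA; elim: s => [|s IH] sT.
  by rewrite (_ : [set w | _] = setT) //; apply/seteqP; split=> w //= _; apply/agreeP.
rewrite (_ : [set w | _] = [set w | agree s a (real_hist A w)] `&` A s.+1 @^-1` [set a s.+1]).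
  by apply: measurableI; [apply: IH; exact: ltnW| apply: hA; rewrite sT].
apply/seteqP; split=> w /=; rewrite agreeS.
  by case/andP=> -> /eqP.
by case=> -> e; rewrite /real_hist e eqxx.
Qed.

Lemma rvec_if n (e : Ω -> bool) (f : Ω -> 'rV[R]_n) c :
  measurable [set w | e w] -> rvec f -> rvec (fun w => if e w then f w else c).
Proof.
move=> me mf D hD.
have mfD := mf D hD.
case: (pselect (D c)) => Dc.
  rewrite (_ : _ @^-1` _ = ([set w | e w] `&` f @^-1` D) `|` ~` [set w | e w]).
    by apply: measurableU; [exact: measurableI| exact: measurableC].
  by apply/seteqP; split=> w /=; case: (e w) => /=; intuition; try done; exfalso; auto.
rewrite (_ : _ @^-1` _ = ([set w | e w] `&` f @^-1` D)).
  exact: measurableI.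
by apply/seteqP; split=> w /=; case: (e w) => /=; intuition; try done; exfalso; auto.
Qed.

Lemma Xin_meas (dim : nat -> nat) (X : forall s : nat, hist Act -> Ω -> 'rV[R]_(dim s))
  (B : forall s : nat, set 'rV[R]_(dim s)) (a : hist Act) s :
  (forall i, (i <= s)%N -> measurable (X i a @^-1` B i)) ->
  measurable (Xin X B s a).
Proof.
elim: s => [|s IH] h.
  rewrite (_ : Xin _ _ _ _ = X 0%N a @^-1` B 0%N); first exact: h.
  apply/seteqP; split=> w /=; first by apply.
  by move=> hB i; rewrite leqn0 => /eqP ->.
rewrite (_ : Xin _ _ _ _ = Xin X B s a `&` X s.+1 a @^-1` B s.+1).
  by apply: measurableI; [apply: IH => i li; apply: h; exact: ltnW| exact: h].
apply/seteqP; split=> w /=.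
  by move=> hw; split; [move=> i li; apply: hw; exact: ltnW| apply: hw].
case=> h1 h2 i; rewrite leq_eqVlt => /orP[/eqP -> //|]; exact: h1.
Qed.

Lemma finP (P : probability Ω R) S : measurable S -> P S = (fine (P S))%:E.
Proof. by move=> mS; rewrite fineK // fin_num_measure. Qed.

Lemma condprob_transfer (P : probability Ω R) (E F E' F' : set Ω) :
  measurable E -> measurable F -> measurable E' -> measurable F' ->
  (0 < P E)%E -> E `<=` E' -> (E' `\` F') `<=` (E `\` F) ->
  condprob P F E = 1 -> condprob P F' E' = 1.
Proof.
move=> mE mF mE' mF' hPE sE sD; rewrite /condprob.
have hpE : 0 < fine (P E) by rewrite (finP P _ mE) lte_fin in hPE.
move=> h.
have e1 : fine (P (F `&` E)) = fine (P E).
  by move: h => /(congr1 (fun x => x * fine (P E))); rewrite mul1r divfK // gt_eqF.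
have e2 : fine (P (E `\` F)) = 0.
  have : P E = (P (E `\` F) + P (E `&` F))%E := @measureDI _ _ _ P E F mE mF.
  rewrite (finP P _ mE) (finP P _ (measurableD mE mF)) (finP P _ (measurableI _ _ mE mF)) -EFinD.
  by case; rewrite setIC e1; lra.
have e3 : fine (P (E' `\` F')) = 0.
  have : (P (E' `\` F') <= P (E `\` F))%E := le_measure P (mem_set (measurableD mE' mF')) (mem_set (measurableD mE mF)) sD.
  rewrite (finP P _ (measurableD mE' mF')) (finP P _ (measurableD mE mF)) lee_fin e2 => h1.
  apply/eqP; rewrite eq_le h1 /=; apply: fine_ge0; exact: measure_ge0.
have e4 : fine (P (F' `&` E')) = fine (P E').
  have : P E' = (P (E' `\` F') + P (E' `&` F'))%E := @measureDI _ _ _ P E' F' mE' mF'.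
  rewrite (finP P _ mE') (finP P _ (measurableD mE' mF')) (finP P _ (measurableI _ _ mE' mF')) -EFinD.
  by case; rewrite e3 add0r setIC.
have hpE' : 0 < fine (P E').
  have : (P E <= P E')%E := le_measure P (mem_set mE) (mem_set mE') sE.
  rewrite (finP P _ mE) (finP P _ mE') lee_fin => h2; exact: lt_le_trans h2.
by rewrite e4 divff // gt_eqF.
Qed.

Lemma Nidx_le (A : forall s, Ω -> Act s) t (a : hist Act) w :
  (Nidx A t a w <= t)%N.
Proof.
rewrite /Nidx; apply: (big_ind (fun n => n <= t)%N) => //.
- by move=> x y hx hy; rewrite geq_max hx hy.
- by move=> i _; rewrite -ltnS.
Qed.

Lemma agreeC s (a b : hist Act) : agree s a b = agree s b a.
Proof. by apply/idP/idP; apply: agree_sym. Qed.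

Lemma meas_interval (f : Ω -> R) (lo hi : R) :
  measurable_fun setT f -> measurable [set w | lo <= f w <= hi].
Proof.
move=> mf; have := mf measurableT _ (measurable_itv `[lo, hi]); rewrite setTI.
rewrite (_ : [set w | _] = f @^-1` `[lo, hi]%classic) //.
Qed.
End H.
Arguments agree_le {Act i s a b}.
Arguments agree_sym {Act s a b}.
Arguments agree_trans {Act s a b c}.
Arguments agreeC {Act s}.
Arguments agree_refl {Act s}.
Arguments Nidx_agree {Act dΩ Ω}.
Arguments Nidx_max {Act dΩ Ω A t a w i}.
Arguments Nidx_le {Act dΩ Ω}.

Lemma witness (R : realType) (dΩ : measure_display)
  (Ω : measurableType dΩ) (P : probability Ω R)
  (T : nat) (Act : nat -> finType) (dim : nat -> nat)
  (X : forall s : nat, hist Act -> Ω -> 'rV[R]_(dim s))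
  (A : forall s : nat, Ω -> Act s)
  (t : nat) (Y : hist Act -> Ω -> R)
  (a : hist Act) (B : forall s : nat, set 'rV[R]_(dim s)) (ylo yhi c : R) :
  (1 <= t <= T)%N ->
  potential_outcomes T t X Y ->
  (forall s (v : Act s), (1 <= s <= T)%N -> measurable (A s @^-1` [set v])) ->
  (forall s, (s <= t)%N -> borelRn (B s)) ->
  (0 < P (Xin X B t a))%E ->
  condprob P [set w | ylo <= Y a w <= yhi] (Xin X B t a) = 1 ->
  ylo <= c <= yhi ->
  sharp_witness P T t X Y A a B ylo yhi c.
Proof.
move=> /andP[t1 tT] [hXp [hYp [hXm hYm]]] hA hB hPE hcond /andP[cl ch].
pose E := Xin X B t a.
have [w0 Ew0] : exists w0, E w0.
  case: (pselect (exists w, E w)) => // ne; exfalso.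
  have E0 : Xin X B t a = set0 by apply/seteqP; split=> w // Ew; apply: ne; exists w.
  by move: hPE; rewrite E0 measure0 ltxx.
pose Xt := fun s a' w => if agree s a' (real_hist A w) then X s a' w else X s a w0.
pose Yt := fun a' w => if agree t a' (real_hist A w) then Y a' w else c.
have hXtm : forall s a', (s <= T)%N -> rvec (Xt s a').
  move=> s a' sT.
  exact: (@rvec_if Act R dΩ Ω _ _ _ _ (meas_agree _ A T a' s hA sT) (hXm s a' sT)).
have hYtm : forall a', measurable_fun setT (Yt a').
  move=> a'; apply: measurable_fun_ifT.
  - apply: (measurable_fun_bool true); rewrite setTI.
    exact: (meas_agree _ A T a' t hA tT).
  - exact (hYm a').
  - exact: measurable_cst.
have hXinE : Xin Xt B t a = XNin X B A t a.
  apply/seteqP; split=> w /= h i li.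
  - have ag := agree_le li (Nidx_agree A t a w).
    have it := leq_trans li (Nidx_le A t a w).
    have := h i it; rewrite /Xt agreeC ag.
    by rewrite (hXp i a (real_hist A w) (leq_trans it tT) (agree_sym ag)).
  - rewrite /Xt; case ag: (agree i a (real_hist A w)); last exact: Ew0.
    have := h i (Nidx_max li (agree_sym ag)).
    by rewrite (hXp i a (real_hist A w) (leq_trans li tT) ag).
have hYt : Yt a = Ybound Y A t a c.
  apply: funext => w; rewrite /Yt /Ybound agreeC.
  case ag: (agree t (real_hist A w) a) => //.
  by rewrite (hYp a (real_hist A w) (agree_sym ag)).
exists Xt, Yt; split; [|split; [|split]].
- split; [|split; [|split]].
  + move=> s a1 a2 sT ag; apply: funext => w; rewrite /Xt (hXp s a1 a2 sT ag).
    have -> : agree s a1 (real_hist A w) = agree s a2 (real_hist A w).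
      apply/idP/idP => h; [apply: agree_trans (agree_sym ag) h | exact: agree_trans ag h].
    by [].
  + move=> a1 a2 ag; apply: funext => w; rewrite /Yt (hYp a1 a2 ag).
    have -> : agree t a1 (real_hist A w) = agree t a2 (real_hist A w).
      apply/idP/idP => h; [apply: agree_trans (agree_sym ag) h | exact: agree_trans ag h].
    by [].
  + exact: hXtm.
  + exact: hYtm.
- have mXin : forall (Z : forall s : nat, hist Act -> Ω -> 'rV[R]_(dim s)),
      (forall s a', (s <= T)%N -> rvec (Z s a')) -> measurable (Xin Z B t a).
    move=> Z hZ; apply: Xin_meas => i li; apply: hZ; last exact: hB.
    exact: leq_trans li tT.
  apply: (condprob_transfer P E [set w | ylo <= Y a w <= yhi] (Xin Xt B t a) [set w | ylo <= Yt a w <= yhi]).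
  + exact: mXin.
  + exact: meas_interval.
  + exact: mXin.
  + exact: meas_interval.
  + exact: hPE.
  + move=> w Ew i li; rewrite /Xt; case: ifP => _; [exact: Ew | exact: Ew0].
  + move=> w [Ew' nF]; rewrite /Yt in nF.
    case ag: (agree t a (real_hist A w)); move: nF; rewrite /= ag => nF; last first.
      by exfalso; apply: nF; rewrite /= cl ch.
    split => //.
    move=> i li; have := Ew' i li; rewrite /Xt.
    by rewrite (agree_le li ag).
  + exact: hcond.
- apply: aeW => w; split => [s sT|]; by rewrite /Xt /Yt agree_refl.
- by rewrite hXinE hYt.
Qed.

Theorem proposition4p6 (R : realType) (dΩ : measure_display)
  (Ω : measurableType dΩ) (P : probability Ω R)
  (T : nat) (Act : nat -> finType) (dim : nat -> nat)
  (X : forall s : nat, hist Act -> Ω -> 'rV[R]_(dim s))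
  (A : forall s : nat, Ω -> Act s)
  (t : nat) (Y : hist Act -> Ω -> R)
  (a : hist Act) (B : forall s : nat, set 'rV[R]_(dim s)) (ylo yhi : R) :
  (1 <= T)%N ->
  (1 <= t <= T)%N ->
  potential_outcomes T t X Y ->
  (forall s (v : Act s), (1 <= s <= T)%N -> measurable (A s @^-1` [set v])) ->
  (forall s, (s <= t)%N -> borelRn (B s)) ->
  (0 < P (Xin X B t a))%E ->
  condprob P [set w | ylo <= Y a w <= yhi] (Xin X B t a) = 1 ->
  sharp_witness P T t X Y A a B ylo yhi ylo /\
  sharp_witness P T t X Y A a B ylo yhi yhi.
Proof.
move=> T1 ht hpo hA hB hPE hcond.
have lohi : ylo <= yhi.
  case: (lerP ylo yhi) => // hlt; exfalso.
  move: hcond; rewrite /condprob.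
  rewrite (_ : [set w | ylo <= Y a w <= yhi] `&` Xin X B t a = set0).
    by rewrite measure0 /= mul0r => /eqP; rewrite eq_sym oner_eq0.
  apply/seteqP; split=> w // [/= /andP[h1 h2] _].
  by have := le_trans h1 h2; rewrite leNgt hlt.
split; apply: witness => //; by rewrite ?lexx lohi.
Qed.
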